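(* The family $\mathcal D_n$ of derangements of $[n]$ is $\left(\frac n{12},\frac n4\right)$-spread.
   Context: A derangement is a permutation of $[n]$ without fixed points; each permutation is identified with its graph $\{(i,\sigma(i)):i\in[n]\}\subset[n]^2$. For a family $\mathcal{F}$ of subsets of $[n]^2$ and $X\subset[n]^2$, $\mathcal{F}(X):=\{F\setminus X: X\subset F\in\mathcal{F}\}$. $\mathcal{F}$ is $r$-spread if $|\mathcal{F}(X)|\le r^{-|X|}|\mathcal{F}|$ for all $X$, and $(r,q)$-spread if $\mathcal{F}(A)$ is $r$-spread for every $A\subset[n]^2$ with $|A|\le q$. *)

(* Defs.v *)
From mathcomp Require Import all_boot all_order all_fingroup all_algebra.
Set Implicit Arguments. Unset Strict Implicit. Unset Printing Implicit Defensive.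
Import GRing.Theory Num.Theory.
Local Open Scope ring_scope.

Definition cell (n : nat) := ('I_n * 'I_n)%type.

Definition perm_graph (n : nat) (s : {perm 'I_n}) : {set cell n} :=
  [set (i, s i) | i : 'I_n].

Definition is_derangement (n : nat) (s : {perm 'I_n}) : bool :=
  [forall i, s i != i].

Definition derangements (n : nat) : {set {set cell n}} :=
  [set perm_graph s | s : {perm 'I_n} & is_derangement s].

Definition link (T : finType) (F : {set {set T}}) (X : {set T}) : {set {set T}} :=
  [set G :\: X | G in F & X \subset G].

Definition spread (T : finType) (r : rat) (F : {set {set T}}) : Prop :=
  forall X : {set T}, (#|link F X|%:R : rat) <= r ^- #|X| * #|F|%:R.

Definition spread2 (T : finType) (r q : rat) (F : {set {set T}}) : Prop :=
  forall A : {set T}, (#|A|%:R : rat) <= q -> spread r (link F A).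

(* Main.v *)
Require Import Defs.
From mathcomp Require Import all_boot all_order all_fingroup all_algebra.
From mathcomp Require Import zify ring.
Set Implicit Arguments. Unset Strict Implicit. Unset Printing Implicit Defensive.

Lemma B3 j y : y <= j -> (j.+1)^y * (2*j - y) <= j^y * (2*j + y).
Proof.
elim: y => [|y IH] Hy; first by rewrite !expn0 !mul1n; lia.
have Hy' : y <= j by lia.
have {}IH := IH Hy'.
have Hd : 0 < 2*j - y by lia.
rewrite -(leq_pmul2r Hd).
have -> : j.+1 ^ y.+1 * (2 * j - y.+1) * (2 * j - y) =
  (j.+1 * (2*j - y.+1)) * (j.+1 ^ y * (2 * j - y)) by rewrite expnS; ring.
apply: (leq_trans (leq_mul (leqnn _) IH)).
have -> : j ^ y.+1 * (2 * j + y.+1) * (2 * j - y) = (j * (2*j + y.+1) * (2*j - y)) * j^y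
  by rewrite expnS; ring.
have -> : j.+1 * (2 * j - y.+1) * (j ^ y * (2 * j + y)) = (j.+1 * (2 * j - y.+1) * (2 * j + y)) * j^y
  by ring.
apply: leq_mul => //.
have [d ->] : exists d, j = y.+1 + d by exists (j - y.+1); lia.
have -> : 2 * (y.+1 + d) - y.+1 = y.+1 + 2 * d by lia.
have -> : 2 * (y.+1 + d) - y = y + 2 + 2 * d by lia.
nia.
Qed.

Lemma L1 j y : y <= j -> (j.+1)^y <= 3 * j^y.
Proof.
move=> Hy; case: j Hy => [|j] Hy.
  by have -> : y = 0 by lia.
have Hd : 0 < 2*j.+1 - y by lia.
rewrite -(leq_pmul2r Hd). have := @B3 _ _ Hy. move=> h. apply: (leq_trans h).
rewrite -mulnA mulnCA; apply: leq_mul => //; lia.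
Qed.

Lemma G K y : y <= K -> K^y * (K-y)`! <= 3^y * K`!.
Proof.
elim: K y => [|K IH] [|y] Hy //=.
  rewrite subSS factS.
have Hy' : y <= K by lia.
have := IH _ Hy'.
have := @L1 _ _ Hy'.
move=> h1 h2.
rewrite expnS -mulnA.
apply: (leq_trans (leq_mul (leqnn _) (leq_mul h1 (leqnn _)))).
rewrite (_ : K.+1 * (3 * K ^ y * (K - y)`!) = (K.+1 * 3) * (K ^ y * (K - y)`!)); last by ring.
rewrite (_ : 3 ^ y.+1 * (K.+1 * K`!) = (K.+1 * 3) * (3 ^ y * K`!)); last by rewrite expnS; ring.
by apply: leq_mul.
Qed.

Definition Q K y := \prod_(i < y) maxn 1 (K - i).

Lemma QS K y : Q K y.+1 = Q K y * maxn 1 (K - y).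
Proof. by rewrite /Q big_ord_recr. Qed.

Lemma QK K x : x <= K -> Q K x * (K - x)`! = K`!.
Proof.
elim: x => [|x IH] Hx; first by rewrite /Q big_ord0 mul1n subn0.
rewrite QS -mulnA.
have -> : maxn 1 (K - x) = K - x by apply/maxn_idPr; lia.
have -> : K - x = (K - x.+1).+1 by lia.
rewrite -factS -IH; last by lia.
by congr (_ * _); congr (_`!); lia.
Qed.

Lemma QK2 K x : K <= x -> Q K x = K`!.
Proof.
elim: x => [|x IH] Hx.
  have HK : K = 0 by lia.
  by rewrite HK /Q big_ord0.
case: (ltngtP K x.+1) => H; [|lia|].
  rewrite QS IH; last by lia.
  have -> : K - x = 0 by lia.
  by rewrite muln1.
by rewrite -H -(@QK K K (leqnn K)) subnn fact0 muln1.
Qed.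

Lemma cube K : (K+3)^3 <= 27 * 3^K.
Proof.
elim: K => [|K IH] //.
rewrite [3 ^ K.+1]expnS.
have h : (K.+1 + 3)^3 <= 3 * (K+3)^3 by rewrite !expnS !expn0; nia.
apply: (leq_trans h).
by rewrite (_ : 27 * (3 * 3 ^ K) = 3 * (27 * 3^K)) //; [apply: leq_mul | ring].
Qed.

Lemma expm m n e : m <= n -> m^e <= n^e.
Proof. by case: e => // e; rewrite leq_exp2r. Qed.

Lemma big3 n K : 3*n <= 4*(K+3) -> n^(K+3) <= 12^(K+3) * K`!.
Proof.
move=> HK.
have H3 : 0 < 3^K by rewrite expn_gt0.
rewrite -(leq_pmul2r H3).
have e1 : n^(K+3) * 3^K = (3*n)^K * n^3 by rewrite expnMn expnD; ring.
rewrite e1.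
have h1 : (3*n)^K <= 4^K * (K+3)^K by rewrite -expnMn; apply: expm.
have h2 : (K+3)^K <= 27 * K^K.
  have a1 := @L1 K K (leqnn K).
  have a2 := @L1 K.+1 K (leqnSn _).
  have a3 := @L1 K.+2 K (leqW (leqnSn _)).
  rewrite addn3.
  have -> : 27 = 3 * 3 * 3 by [].
  apply: (leq_trans a3); rewrite -!mulnA leq_mul2l /=.
  apply: (leq_trans a2); rewrite leq_mul2l /=.
  exact: a1.
have h3 := @G K K (leqnn K).
rewrite subnn fact0 muln1 in h3.
have h4 : 27 * n^3 <= 1728 * 3^K.
  have c := cube K.
  have : (3*n)^3 <= (4*(K+3))^3 by apply: expm.
  rewrite !expnMn.
  have -> : 3^3 = 27 by []. have -> : 4^3 = 64 by [].
  have -> : 1728 = 64 * 27 by [].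
  move=> h; apply: (leq_trans h); rewrite -mulnA leq_mul2l /=; exact: c.
apply: (leq_trans (leq_mul h1 (leqnn _))).
apply: (leq_trans (leq_mul (leq_mul (leqnn (4^K)) h2) (leqnn _))).
apply: (leq_trans (leq_mul (leq_mul (leqnn (4^K)) (leq_mul (leqnn 27) h3)) (leqnn _))).
have -> : 4 ^ K * (27 * (3 ^ K * K`!)) * n ^ 3 = (4^K * 3^K * K`!) * (27 * n^3) by ring.
have -> : 12 ^ (K + 3) * K`! * 3 ^ K = (4^K * 3^K * K`!) * (1728 * 3^K).
  rewrite expnD (_ : 12 = 4 * 3) // expnMn; ring.
by apply: leq_mul.
Qed.

Lemma Arith n K x : 12 <= n -> 3*n <= 4*(K+3) -> x <= K+3 -> n^x <= 12^x * Q K x.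
Proof.
move=> Hn HK Hx.
case: (leqP x K) => HxK.
  have Hf : 0 < 3^x * (K-x)`! by rewrite muln_gt0 expn_gt0 fact_gt0.
  rewrite -(leq_pmul2r Hf).
  have h1 : n^x * (3^x * (K-x)`!) <= 12^x * (K^x * (K-x)`!).
    rewrite mulnA -expnMn (mulnA (12^x)) -expnMn.
    apply: leq_mul => //; apply: expm; lia.
  apply: (leq_trans h1).
  have h2 := @G K x HxK.
  rewrite -(@QK K x HxK) in h2.
  have -> : 12 ^ x * Q K x * (3 ^ x * (K - x)`!) = 12^x * (3 ^ x * (Q K x * (K - x)`!)) by ring.
  by apply: leq_mul.
rewrite QK2; last by lia.
have Ht : 0 < 12^(K+3-x) by rewrite expn_gt0.
rewrite -(leq_pmul2r Ht).
have h : n^x * 12^(K+3-x) <= n^(K+3).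
  have -> : n^(K+3) = n^x * n^(K+3-x) by rewrite -expnD; congr (_ ^ _); lia.
  by apply: leq_mul => //; apply: expm.
apply: (leq_trans h); apply: (leq_trans (@big3 n K HK)).
have -> : 12 ^ x * K`! * 12 ^ (K + 3 - x) = 12 ^ x * 12 ^ (K + 3 - x) * K`! by ring.
rewrite -expnD; have -> : x + (K + 3 - x) = K + 3 by lia.
by [].
Qed.

Section Comb.
Variable n : nat.

Definition S (B : {set cell n}) : {set {perm 'I_n}} :=
  [set s | is_derangement s & B \subset perm_graph s].

Lemma mem_pg (s : {perm 'I_n}) i j : ((i,j) \in perm_graph s) = (s i == j).
Proof.
apply/imsetP/eqP => [[k _ [-> ->]] // | <-]; by exists i.
Qed.

Lemma card_pg (s : {perm 'I_n}) : #|perm_graph s| = n.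
Proof. by rewrite card_imset ?card_ord // => i j []. Qed.

Lemma switch (B : {set cell n}) (e : cell n) : e \notin B ->
  (n - #|B| - 3) * #|S (e |: B)| <= #|S B|.
Proof.
case: e => u v Hb.
set S' := S ((u,v) |: B).
pose rows := [set c.1 | c in B].
pose W (s : {perm 'I_n}) := ~: rows :\ u :\ v :\ (s^-1)%g u.
pose P := [set p : {perm 'I_n} * 'I_n | (p.1 \in S') && (p.2 \in W p.1)].
pose f (p : {perm 'I_n} * 'I_n) := (tperm u p.2 * p.1)%g.
have d1 : forall (A : {set 'I_n}) a, #|A| - 1 <= #|A :\ a|.
  by move=> A a; rewrite (cardsD1 a A); case: (a \in A) => /=; lia.
have hW : forall s, n - #|B| - 3 <= #|W s|.
  move=> s.
  have c1 : #|rows| <= #|B| := leq_imset_card _ _.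
  have := cardsC rows; rewrite card_ord => c2.
  have := d1 (~: rows) u; have := d1 (~: rows :\ u) v; have := d1 (~: rows :\ u :\ v) ((s^-1)%g u).
  rewrite /W; move=> a b c; apply: (leq_trans _ a); apply: (leq_trans _ (leq_sub2r 1 b)); apply: (leq_trans _ (leq_sub2r 1 (leq_sub2r 1 c))).
  have -> : #|~: rows| = n - #|rows| by lia.
  lia.
have hP1 : (n - #|B| - 3) * #|S'| <= #|P|.
  have -> : #|P| = \sum_(s in S') #|W s|.
    rewrite (eq_bigr (fun s => \sum_(w in W s) 1)) => [|s _]; last by rewrite sum1_card.
    rewrite pair_big_dep /= sum1_card; apply: eq_card => p; by rewrite inE.
  rewrite mulnC -sum_nat_const; exact: leq_sum.
have Suv : forall s, s \in S' -> s u = v.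
  move=> s; rewrite inE => /andP [_ /subsetP H].
  by apply/eqP; rewrite -mem_pg; apply: H; rewrite !inE eqxx.
have hinj : {in P &, injective f}.
  move=> [s w] [t w'] Hp Hq E.
  rewrite inE /= in Hp; rewrite inE /= in Hq.
  case/andP: Hp => Hs _; case/andP: Hq => Ht _.
  have fw : forall r x, r \in S' -> f (r, x) x = v.
    by move=> r x Hr; rewrite /f /= permM tpermR Suv.
  have Ew : w = w'.
    apply: (@perm_inj _ (f (t, w'))); rewrite -{1}E !fw //.
  subst w'; move: E; rewrite /f /=; by move/mulgI ->.
have hsub : f @: P \subset S B.
  apply/subsetP => _ /imsetP [[s w] Hp ->].
  rewrite inE /= in Hp; case/andP: Hp => Hs Hw.
  have su := Suv _ Hs.
  rewrite !inE in Hs; case/andP: Hs => /forallP Hd HB.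
  rewrite !inE in Hw.
  case/and4P: Hw => Hw1 Hw2 Hw3 Hw4.
  rewrite inE; apply/andP; split.
    apply/forallP => i; rewrite /f /= permM.
    case: (eqVneq i u) => [->|Hiu].
      rewrite tpermL; apply/eqP => E; move/eqP: Hw1; apply.
      by rewrite -E permK.
    case: (eqVneq i w) => [->|Hiw].
      by rewrite tpermR su eq_sym.
    by rewrite tpermD ?Hd // eq_sym.
  apply/subsetP => [[i j]] Hij.
  have : (i, j) \in perm_graph s by apply: (subsetP HB); rewrite !inE Hij orbT.
  rewrite !mem_pg /f /= permM => /eqP Hsi.
  have Hiu : u != i.
    apply/eqP => E; subst i; rewrite su in Hsi; subst j; by rewrite Hij in Hb.
  have Hiw : w != i.
    apply/eqP => E; subst i; move/negP: Hw4; apply; apply/imsetP; by exists (w,j).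
  by rewrite tpermD // Hsi.
have := subset_leq_card hsub; rewrite card_in_imset // => hP2.
exact: leq_trans hP1 hP2.
Qed.


Lemma switch' (B : {set cell n}) (e : cell n) : e \notin B ->
  maxn 1 (n - #|B| - 3) * #|S (e |: B)| <= #|S B|.
Proof.
move=> He; rewrite maxnMl geq_max mul1n switch // andbT.
apply: subset_leq_card; apply/subsetP => s; rewrite !inE => /andP [-> H] /=.
exact: subset_trans (subsetUr _ _) H.
Qed.

Lemma iter (A : {set cell n}) y : forall Y : {set cell n}, #|Y| = y -> [disjoint A & Y] ->
  Q (n - #|A| - 3) y * #|S (A :|: Y)| <= #|S A|.
Proof.
elim: y => [|y IH] Y hY hD.
  by rewrite (cards0_eq hY) setU0 /Q big_ord0 mul1n.
have : 0 < #|Y| by rewrite hY.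
case/card_gt0P => e He.
have hY' : #|Y :\ e| = y by move: hY; rewrite (cardsD1 e) He add1n => -[].
have hD' : [disjoint A & Y :\ e] by apply: disjointWr hD; exact: subsetDl.
have eA : e \notin A :|: (Y :\ e).
  by rewrite !inE eqxx /= orbF (disjointFl hD He).
have cB : #|A :|: (Y :\ e)| = #|A| + y by rewrite cardsU (disjoint_setI0 hD') cards0 subn0 hY'.
have E : e |: (A :|: (Y :\ e)) = A :|: Y by rewrite setUCA setD1K.
have h1 := switch' eA.
rewrite E cB in h1.
have h2 := IH _ hY' hD'.
rewrite QS -mulnA.
apply: leq_trans (leq_mul (leqnn _) _) h2.
have -> : n - #|A| - 3 - y = n - (#|A| + y) - 3 by lia.
exact: h1.
Qed.

End Comb.

Lemma keynat n (A X : {set cell n}) : 4 * #|A| <= n ->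
  n ^ #|X| * #|link (link (derangements n) A) X| <= 12 ^ #|X| * #|link (derangements n) A|.
Proof.
move=> hA.
set D := derangements n.
pose S' := [set s : {perm 'I_n} | is_derangement s & (A \subset perm_graph s) && (X \subset perm_graph s :\: A)].
have hL : #|link (link D A) X| <= #|S'|.
  apply: leq_trans (leq_imset_card (fun s : {perm 'I_n} => perm_graph s :\: A :\: X) S').
  apply: subset_leq_card; apply/subsetP => _ /imsetP [H HH ->].
  rewrite inE in HH; case/andP: HH => /imsetP [G HG ->] HX.
  rewrite inE in HG; case/andP: HG => /imsetP [s Hs EG] HA; subst G.
  rewrite inE in Hs.
  apply/imsetP; exists s => //.
  by rewrite inE Hs HA HX.
have hR : #|S A| <= #|link D A|.
  have hinj : {in S A &, injective (fun s : {perm 'I_n} => perm_graph s :\: A)}.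
    move=> s t; rewrite !inE => /andP [_ Hs] /andP [_ Ht] E.
    have E2 : perm_graph s = perm_graph t.
      have e1 : perm_graph s = A :|: (perm_graph s :\: A) by rewrite -{1}(setID (perm_graph s) A) (setIidPr Hs).
      have e2 : perm_graph t = A :|: (perm_graph t :\: A) by rewrite -{1}(setID (perm_graph t) A) (setIidPr Ht).
      by rewrite e1 e2 E.
    apply/permP => i; apply/eqP; rewrite -mem_pg E2 mem_pg //.
  rewrite -(card_in_imset hinj); apply: subset_leq_card.
  apply/subsetP => _ /imsetP [s Hs ->].
  rewrite inE in Hs; case/andP: Hs => Hd HA.
  apply/imsetP; exists (perm_graph s) => //.
  rewrite inE HA andbT; apply/imsetP; exists s => //; by rewrite inE.
case: (leqP n 12) => Hn.
  apply: leq_mul; first exact: expm.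
  apply: leq_trans (leq_imset_card _ _) _.
  by apply: subset_leq_card; apply/subsetP => G; rewrite inE => /andP [].
case: (set_0Vmem S') => [S0|[s0 Hs0]].
  by rewrite S0 cards0 leqn0 in hL; rewrite (eqP hL) muln0.
have Hs0' := Hs0; rewrite inE in Hs0'; case/and3P: Hs0' => _ HA0 HX0.
have hD : [disjoint A & X].
  rewrite disjoint_sym disjoints_subset; apply: subset_trans HX0 _.
  by rewrite setDE subsetIr.
have ES : S' = S (A :|: X).
  apply/setP => s; rewrite !inE subUset setDE subsetI.
  have -> : (X \subset ~: A) by rewrite -disjoints_subset disjoint_sym.
  by rewrite andbT.
have cAX : #|A| + #|X| <= n.
  have := subset_leq_card (_ : A :|: X \subset perm_graph s0).
  rewrite card_pg cardsU (disjoint_setI0 hD) cards0 subn0; apply.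
  rewrite subUset HA0 /=; apply: subset_trans HX0 _; exact: subsetDl.
have hI := iter (erefl #|X|) hD.
have hAr := @Arith n (n - #|A| - 3) #|X| (ltnW Hn).
have {}hAr : n ^ #|X| <= 12 ^ #|X| * Q (n - #|A| - 3) #|X| by apply: hAr; lia.
apply: leq_trans (leq_mul (leqnn _) hL) _.
rewrite ES.
apply: leq_trans (leq_mul hAr (leqnn _)) _.
rewrite -mulnA; apply: leq_mul => //.
exact: leq_trans hI hR.
Qed.

Import GRing.Theory Num.Theory.
Local Open Scope ring_scope.

Theorem lemma13 (n : nat) :
  spread2 (n%:R / 12%:R) (n%:R / 4%:R) (derangements n).
Proof.
move=> A hA X.
have hA' : (4 * #|A| <= n)%N.
  rewrite -(ler_nat rat) natrM; rewrite ler_pdivlMr ?ltr0n // in hA.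
  by rewrite mulrC.
have key := keynat X hA'.
move: key; set L := #|link _ X|; set R := #|link _ A|; set x := #|X| => key.
have {}key : (n%:R ^+ x * L%:R <= 12%:R ^+ x * R%:R :> rat).
  by rewrite -!natrX -!natrM ler_nat.
have [n0|npos] := eqVneq n 0%N.
  have x0 : x = 0%N.
    have := max_card (mem X); rewrite card_prod card_ord => h.
    have h2 : (n * n = 0)%N by rewrite n0.
    rewrite h2 in h; by apply/eqP; rewrite -leqn0.
  by move: key; rewrite x0 !expr0 !mul1r.
rewrite -exprVn invf_div expr_div_n.
rewrite mulrAC ler_pdivlMr ?exprn_gt0 ?ltr0n ?lt0n //.
by rewrite mulrC.
Qed.
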